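(* Let $\mu,\sigma>0$, $T>0$, $K\in\mathbb{N}$ and $\Gamma>0$ satisfy $\mu\sqrt{kT/K}/\sigma\le\Gamma$ for all $k\in\{1,\dots,K\}$. Let \[\mathcal{U}_1=\Big\{r\in\mathbb{R}^K:\Big|\tfrac{\sum_{\ell=1}^k\log(1+r_\ell)-\mu kT/K}{\sigma\sqrt{kT/K}}\Big|\le\Gamma,\ \forall k\in\{1,\dots,K\}\Big\},\] \[\mathcal{W}=\Big\{r\in\mathbb{R}^K:\max_{k'\in\{k+1,\dots,K\}}\Big|\tfrac{\sum_{\ell=1}^k\log(1+r_\ell)-\mu k'T/K}{\sigma\sqrt{k'T/K}}\Big|-\Gamma\le0,\ \forall k\in\{1,\dots,K\}\Big\},\] and $\mathcal{U}'_1=\mathcal{U}_1\cap\mathcal{W}$. Then the worst-case risk measure $\rho$ using the uncertainty set $\mathcal{U}'_1$ satisfies both the bounded market risk assumption and the bounded conditional market risk assumption.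
   Context: Returns $r=(r_1,\dots,r_K)$ of a risky asset on $\Omega=\mathbb{R}^K$ (Borel $\sigma$-algebra, natural filtration $\mathcal{F}_k=\sigma(r_1,\dots,r_k)$); wealth from investing amounts $\zeta_k$ ($\mathcal{F}_k$-measurable) in the risky asset is $X_k=p_0+\sum_{k'=0}^{k-1}\zeta_{k'}r_{k'+1}$, zero interest rate. For an uncertainty set $\mathcal{U}\subseteq\mathbb{R}^K$, the worst-case risk measure is $\rho(X)=\sup_{r\in\mathcal{U}}X(r)$, with one-step decomposition $\rho=\rho_0\circ\cdots\circ\rho_{K-1}$, where $\rho_k(X,r)=\sup_{r'\in\mathcal{U}:r'_{1:k}=r_{1:k}}X(r')$ if some $r'\in\mathcal{U}$ has $r'_{1:k}=r_{1:k}$, and otherwise $\rho_k(X,r)=X([r_{1:k};0_{k+1:K}])$ (understood as $\inf_{\epsilon>0}\operatorname{ess\,sup}$ over $r'$ with $r'_{1:k}=r_{1:k}$, $\|r'_{k+1:K}\|_\infty\le\epsilon$). Let $\rho_{k,K}=\rho_k\circ\cdots\circ\rho_{K-1}$. Bounded market risk: $0\ge\inf_{\zeta}\rho(-\sum_{k=0}^{K-1}\zeta_kr_{k+1})>-\infty$ (for coherent $\rho$ equivalently $=0$). Bounded conditional market risk: for each $k\in\{0,\dots,K-1\}$, $0\ge\inf_{\zeta_k,\dots,\zeta_{K-1}}\rho_{k,K}(-\sum_{\ell=k}^{K-1}\zeta_\ell r_{\ell+1})>-\infty$ a.s. (equal to $0$ when the conditional mappings are scale invariant, as here). *)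

(* Defs.v *)
From HB Require Import structures.
From mathcomp Require Import all_boot all_order all_algebra.
From mathcomp Require Import all_classical all_reals all_analysis.
Set Implicit Arguments. Unset Strict Implicit. Unset Printing Implicit Defensive.
Import Order.TTheory GRing.Theory Num.Theory.
Local Open Scope classical_set_scope.
Local Open Scope ring_scope.

Section Defs.
Variables (R : realType) (K : nat).

(* Sample space Omega = R^K ; coordinate i : 'I_K is the return r_{i+1}. *)
Definition Omega := 'I_K -> R.

(* 0-based access to coordinates by a natural number (0 outside range). *)
Definition ret (r : Omega) (l : nat) : R := oapp r 0 (insub l).

Definition logsum (r : Omega) (k : nat) : R :=
  \sum_(l < k) ln (1 + ret r l).

Definition tk (T : R) (k : nat) : R := k%:R * T / K%:R.

Definition zscore (mu sigma T : R) (r : Omega) (k k' : nat) : R :=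
  (logsum r k - mu * tk T k') / (sigma * Num.sqrt (tk T k')).

(* U_1 (the log(1 + r_l) in it is required to be defined: r_l > -1) *)
Definition U1 (mu sigma T Gamma : R) : set Omega :=
  [set r | (forall l : 'I_K, 0 < 1 + r l) /\
           (forall k, (1 <= k <= K)%N -> `|zscore mu sigma T r k k| <= Gamma)].

(* W: max_{k' in {k+1..K}} |...| - Gamma <= 0 for all k in {1..K};
   written as: every term of the max is <= Gamma. *)
Definition W (mu sigma T Gamma : R) : set Omega :=
  [set r | forall k, (1 <= k <= K)%N ->
     forall k', (k < k' <= K)%N -> `|zscore mu sigma T r k k'| <= Gamma].

Definition U1' (mu sigma T Gamma : R) : set Omega :=
  U1 mu sigma T Gamma `&` W mu sigma T Gamma.

(* sigma-algebra F_k = sigma(r_1, ..., r_k) on Omega *)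
Definition Fk (k : nat) : set (set Omega) :=
  <<s [set S : set Omega | exists (j : 'I_K) (A : set R),
          [/\ (j < k)%N, measurable A & S = (fun r : Omega => r j) @^-1` A]] >>.

Definition Fk_measurable (k : nat) (f : Omega -> R) : Prop :=
  forall B : set R, measurable B -> Fk k (f @^-1` B).

Definition strategy (zeta : nat -> Omega -> R) : Prop :=
  forall k, (k < K)%N -> Fk_measurable k (zeta k).

(* - sum_{l=k}^{K-1} zeta_l r_{l+1}  (here r_{l+1} is coordinate l) *)
Definition neg_gains (k : nat) (zeta : nat -> Omega -> R) : Omega -> \bar R :=
  fun r => (- \sum_(k <= l < K) zeta l r * ret r l)%:E.

Definition rho (U : set Omega) (X : Omega -> \bar R) : \bar R :=
  ereal_sup (X @` U).

Definition same_prefix (k : nat) (r r' : Omega) : Prop :=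
  forall i : 'I_K, (i < k)%N -> r' i = r i.

Definition trunc (k : nat) (r : Omega) : Omega :=
  fun i => if (i < k)%N then r i else 0.

Definition rho_k (U : set Omega) (k : nat) (X : Omega -> \bar R) : Omega -> \bar R :=
  fun r => if `[< exists2 r', U r' & same_prefix k r r' >]
           then ereal_sup (X @` [set r' | U r' /\ same_prefix k r r'])
           else X (trunc k r).

Definition rho_kK (U : set Omega) (k : nat) (X : Omega -> \bar R) : Omega -> \bar R :=
  foldr (fun j Y => rho_k U j Y) X (iota k (K - k)).

Definition bounded_market_risk (U : set Omega) : Prop :=
  let I := ereal_inf [set rho U (neg_gains 0 zeta) | zeta in strategy] in
  (I <= 0)%E /\ (-oo < I)%E.

(* bounded conditional market risk (stated for every r, hence a.s.) *)
Definition bounded_conditional_market_risk (U : set Omega) : Prop :=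
  forall k, (k < K)%N -> forall r : Omega,
    let I := ereal_inf [set rho_kK U k (neg_gains k zeta) r | zeta in strategy] in
    (I <= 0)%E /\ (-oo < I)%E.

End Defs.

(* Main.v *)
Require Import Defs.
From HB Require Import structures.
From mathcomp Require Import all_boot all_order all_algebra.
From mathcomp Require Import all_classical all_reals all_analysis.
From mathcomp Require Import ring lra.
Import Order.TTheory GRing.Theory Num.Theory.
Local Open Scope classical_set_scope.
Local Open Scope ring_scope.

Lemma ret_trunc (R : realType) (K : nat) (j : nat) (r : Omega R K) (l : nat) :
  ret (trunc j r) l = if (l < j)%N then ret r l else 0.
Proof.
rewrite /ret; case: insubP => [i _ <-|_] /=; rewrite /trunc; by case: ifP.
Qed.

Lemma logsum_trunc (R : realType) (K : nat) (j : nat) (r : Omega R K) (k : nat) :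
  logsum (trunc j r) k = logsum r (minn k j).
Proof.
rewrite /logsum; case: (leqP k j) => hkj.
  apply: eq_bigr => i _.
  by rewrite ret_trunc (leq_trans (ltn_ord i) hkj).

rewrite -!(big_mkord xpredT (fun l => ln (1 + ret _ l))).
rewrite (@big_cat_nat _ _ _ j) /= ?(ltnW hkj) //.
rewrite [X in _ + X]big1_seq ?addr0.
  by apply: eq_big_nat => l /andP[_ hl]; rewrite ret_trunc hl.
move=> l /andP[_]; rewrite mem_index_iota => /andP[hl _].
by rewrite ret_trunc ltnNge hl /= addr0 ln1.
Qed.

Lemma bound0 (R : realType) (mu sigma T Gamma : R) (K : nat)
  (hmu : 0 < mu) (hsigma : 0 < sigma) (hT : 0 < T)
  (hcond : forall k : nat, (1 <= k <= K)%N ->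
             mu * Num.sqrt (k%:R * T / K%:R) / sigma <= Gamma) k :
  (1 <= k <= K)%N ->
  `|(0 - mu * @tk R K T k) / (sigma * Num.sqrt (@tk R K T k))| <= Gamma.
Proof.
move=> hk; have := hcond k hk; apply: le_trans; rewrite /tk.
set t := k%:R * T / K%:R.
have tpos : 0 < t.
  case/andP: hk => h1 h2.
  rewrite /t divr_gt0 // ?mulr_gt0 // ltr0n //; exact: leq_trans h2.
have st : 0 < Num.sqrt t by rewrite sqrtr_gt0.
rewrite sub0r mulNr normrN ger0_norm; last first.
  by rewrite divr_ge0 // ?mulr_ge0 // ltW // ?mulr_gt0.
rewrite -{1}(sqr_sqrtr (ltW tpos)) le_eqVlt; apply/orP; left; apply/eqP.
field; apply/andP; split; apply/lt0r_neq0 => //.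
Qed.

Lemma wext (R : realType) (mu sigma T Gamma : R) (K : nat)
  (hmu : 0 < mu) (hsigma : 0 < sigma) (hT : 0 < T)
  (hcond : forall k : nat, (1 <= k <= K)%N ->
             mu * Num.sqrt (k%:R * T / K%:R) / sigma <= Gamma)
  (r : Omega R K) : U1' mu sigma T Gamma r ->
  forall j k', (j < k' <= K)%N -> `|zscore mu sigma T r j k'| <= Gamma.
Proof.
move=> [_ hW] j k' /andP[hjk hk'].
case: j hjk => [|j] hjk.
  rewrite /zscore /logsum big_ord0.
  by apply: bound0 => //; rewrite hk' andbT; exact: hjk.
apply: hW => //; [rewrite /= (leq_trans _ hk') // ltnW | rewrite hjk hk'] => //.
Qed.

Lemma U1'_trunc (R : realType) (mu sigma T Gamma : R) (K : nat)
  (hmu : 0 < mu) (hsigma : 0 < sigma) (hT : 0 < T)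
  (hcond : forall k : nat, (1 <= k <= K)%N ->
             mu * Num.sqrt (k%:R * T / K%:R) / sigma <= Gamma)
  (r : Omega R K) j : U1' mu sigma T Gamma r -> U1' mu sigma T Gamma (trunc j r).
Proof.
move=> hr; have hw := @wext R mu sigma T Gamma K hmu hsigma hT hcond r hr.
case: hr => [[hpos hU] hW].
have ez : forall k k', zscore mu sigma T (trunc j r) k k' = zscore mu sigma T r (minn k j) k'.
  by move=> k k'; rewrite /zscore logsum_trunc.
split; [split|].
- by move=> l; rewrite /trunc; case: ifP => // _; rewrite addr0.
- move=> k hk; rewrite ez; case: (leqP k j) => hkj; first exact: hU.
  by apply: hw; rewrite hkj; case/andP: hk.
- move=> k hk k' hk'; rewrite ez; case: (leqP k j) => hkj; first exact: hW.
  apply: hw; case/andP: hk' => h1 h2; rewrite h2 andbT.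
  exact: ltn_trans hkj h1.
Qed.

Lemma zero_U1' (R : realType) (mu sigma T Gamma : R) (K : nat)
  (hmu : 0 < mu) (hsigma : 0 < sigma) (hT : 0 < T)
  (hcond : forall k : nat, (1 <= k <= K)%N ->
             mu * Num.sqrt (k%:R * T / K%:R) / sigma <= Gamma) :
  U1' mu sigma T Gamma (fun _ : 'I_K => 0 : R).
Proof.
have l0 : forall k, logsum (fun _ : 'I_K => 0 : R) k = 0.
  move=> k; apply: big1 => l _; rewrite /ret; case: insubP => [i _ _|_] /=;
  by rewrite addr0 ln1.
split; [split|].
- by move=> l; rewrite addr0.
- by move=> k hk; rewrite /zscore l0; apply: bound0.
- move=> k hk k' hk'; rewrite /zscore l0; apply: bound0 => //.
  case/andP: hk' => h1 ->; rewrite andbT; exact: leq_ltn_trans h1.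
Qed.

Lemma rho_kK_cst0 (R : realType) (K : nat) (U : set (Omega R K)) s :
  foldr (fun j Y => rho_k U j Y) (fun _ => 0%E) s = (fun _ => 0%E).
Proof.
elim: s => //= j s ->; apply/funext => r; rewrite /rho_k.
case: asboolP => // -[r' h1 h2].
have -> : (fun _ : Omega R K => 0%E : \bar R) @` [set x | U x /\ Defs.same_prefix j r x]
          = [set 0%E].
  apply/seteqP; split => x /=; first by case=> ? _ <-.
  by move=> ->; exists r'.
exact: ereal_sup1.
Qed.

Lemma rho_kK_S (R : realType) (K : nat) (U : set (Omega R K)) j X :
  (j < K)%N -> rho_kK U j X = rho_k U j (rho_kK U j.+1 X).
Proof.
move=> hj; rewrite /rho_kK.
have -> : (K - j = (K - j.+1).+1)%N by rewrite subnSK.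
by [].
Qed.

Lemma invariant (R : realType) (mu sigma T Gamma : R) (K : nat)
  (hmu : 0 < mu) (hsigma : 0 < sigma) (hT : 0 < T)
  (hcond : forall k : nat, (1 <= k <= K)%N ->
             mu * Num.sqrt (k%:R * T / K%:R) / sigma <= Gamma)
  (kk : nat) (zeta : nat -> Omega R K -> R) :
  forall n j, (kk <= j)%N -> (j + n = K)%N -> forall r,
  ((- \sum_(kk <= l < j) zeta l (trunc j r) * ret (trunc j r) l)%:E <=
    rho_kK (U1' mu sigma T Gamma) j (neg_gains kk zeta) r)%E.
Proof.
elim => [|n IH] j hkj hjn r.
  rewrite addn0 in hjn; subst j.
  rewrite /rho_kK subnn /= /neg_gains.
  have -> : trunc K r = r by apply/funext => i; rewrite /trunc ltn_ord.
  by [].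
have hjK : (j < K)%N by rewrite -hjn addnS ltnS leq_addr.
rewrite rho_kK_S //.
set Y := rho_kK _ j.+1 _.
have key : forall r'', Defs.same_prefix j r r'' ->
    ((- \sum_(kk <= l < j) zeta l (trunc j r) * ret (trunc j r) l)%:E <=
      Y (trunc j r''))%E.
  move=> r'' hp.
  have -> : trunc j r'' = trunc j r.
    by apply/funext => i; rewrite /trunc; case: ifP => // h; exact: hp.
  apply: le_trans (IH j.+1 (leqW hkj) _ _); last by rewrite addSnnS.
  have -> : trunc j.+1 (trunc j r) = trunc j r.
    apply/funext => i; rewrite /trunc; case: ifP => h //.
    by case: ifP => // h2; move: h; rewrite ltnS (ltnW h2).
  by rewrite big_nat_recr //= ret_trunc ltnn mulr0 addr0.
rewrite /rho_k; case: asboolP => [[r' hU hp]|hn]; last exact: key.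
apply: le_ereal_sup_tmp; exists (Y (trunc j r')); last exact: key.
exists (trunc j r') => //; split.
  exact: U1'_trunc.
by move=> i hi; rewrite /trunc hi; exact: hp.
Qed.

Lemma zero_strategy (R : realType) (K : nat) :
  strategy (fun (_ : nat) (_ : Omega R K) => 0 : R).
Proof.
move=> k _ B _.
have [h0 hC _] : sigma_algebra setT (Fk (R:=R) (K:=K) k).
  exact: smallest_sigma_algebra.
case: (pselect (B 0)) => hB.
  have -> : (fun _ : Omega R K => 0 : R) @^-1` B = setT.
    by apply/seteqP; split => x //=.
  by rewrite -(setD0 setT); exact: hC.
have -> : (fun _ : Omega R K => 0 : R) @^-1` B = set0.
  by apply/seteqP; split => x //=.
exact: h0.
Qed.

Lemma neg_gains0 (R : realType) (K : nat) k :
  neg_gains k (fun (_ : nat) (_ : Omega R K) => 0 : R) = (fun _ => 0%E).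
Proof.
apply/funext => r; rewrite /neg_gains big1 ?oppr0 // => l _; exact: mul0r.
Qed.

Theorem lemma5 (R : realType) (mu sigma T Gamma : R) (K : nat)
  (hmu : 0 < mu) (hsigma : 0 < sigma) (hT : 0 < T) (hGamma : 0 < Gamma)
  (hcond : forall k : nat, (1 <= k <= K)%N ->
             mu * Num.sqrt (k%:R * T / K%:R) / sigma <= Gamma) :
  bounded_market_risk (@U1' R K mu sigma T Gamma) /\
  bounded_conditional_market_risk (@U1' R K mu sigma T Gamma).
Proof.
have hz := @zero_U1' R mu sigma T Gamma K hmu hsigma hT hcond.
split.
  split.
    apply: ge_ereal_inf; exists 0%E => //.
    exists (fun _ _ => 0); first exact: zero_strategy.
    rewrite /rho neg_gains0.
    have -> : (fun _ : Omega R K => 0%E : \bar R) @` U1' mu sigma T Gamma = [set 0%E].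
      apply/seteqP; split => x /=; first by case=> ? _ <-.
      by move=> ->; exists (fun _ => 0).
    exact: ereal_sup1.
  apply: (@lt_le_trans _ _ 0%E); first exact: ltNyr.
  apply: le_ereal_inf_tmp => _ [zeta _ <-].
  rewrite /rho; apply: le_ereal_sup_tmp; exists 0%E => //.
  exists (fun _ => 0) => //; rewrite /neg_gains big1 ?oppr0 // => l _.
  rewrite /ret; case: insubP => [i _ _|_] /=; by rewrite mulr0.
move=> k hk r /=; split.
  apply: ge_ereal_inf; exists 0%E => //.
  exists (fun _ _ => 0); first exact: zero_strategy.
  by rewrite neg_gains0 /rho_kK rho_kK_cst0.
apply: (@lt_le_trans _ _ 0%E); first exact: ltNyr.
apply: le_ereal_inf_tmp => _ [zeta _ <-].
have := @invariant R mu sigma T Gamma K hmu hsigma hT hcond k zeta (K - k) k (leqnn k)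
  (subnKC (ltnW hk)) r.
by rewrite big_geq // oppr0.
Qed.
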